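(* Let $q\ge2$ be an integer and $p$ a prime not dividing $q$. For every finite field $F$ of characteristic $p$ and every positive integer $d$, every $d$-dimensional VLNC solution over $F$ of the Char-$q$-$s$ network has $s$-coefficient matrix $A_1=0$ on $e_1$.
   Context: Vector linear network coding: each source $v$ generates $x_v\in F^d$; an edge out of a source $v$ carries $Ax_v$ for a $d\times d$ matrix $A$ over $F$; an edge out of an intermediate node carries $\sum A_{e',e}y_{e'}$ over the edges $e'$ entering that node; a terminal computes vectors $\sum B_ey_e$ over its incoming edges; a $d$-dimensional VLNC solution over $F$ is such a code with which every terminal computes each demanded message for all message choices. The Char-$q$-$s$ network (integer $q\ge2$): sources $s,x_1,\dots,x_{q+2}$; intermediate nodes $m_1,\dots,m_{q+3},n_1,\dots,n_{q+3}$; terminals $r_1,\dots,r_{q+3}$; edges: $(x_1,m_i)$ for $1\le i\le q+1$; $(s,m_1)$ and $(s,m_i)$ for $4\le i\le q+3$; $(x_i,m_j)$ for $2\le i,j\le q+2$, $i\ne j$; $(x_i,m_{q+3})$ for $1\le i\le q+2$; $e_i=(m_i,n_i)$ for $1\le i\le q+3$; $(n_i,r_i)$ for $1\le i\le q+2$; $(n_{q+3},r_i)$ and $(n_i,r_{q+3})$ for $1\le i\le q+2$; $(x_i,r_1)$ for $2\le i\le q+1$; $(x_1,r_{q+2})$; $(s,r_2)$; $(s,r_3)$. Demands: $r_1$ demands $x_{q+2}$; $r_i$ demands $x_i$ for $2\le i\le q+2$; $r_{q+3}$ demands $x_1$; no terminal demands $s$. In any $d$-dimensional VLNC over $F$ the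 vector on $e_1$ has the form $y_{e_1}=M_1x_1+A_1s$ with $d\times d$ matrices $M_1,A_1$; $A_1$ is called the $s$-coefficient matrix on $e_1$. *)

(* Defs.v *)
From HB Require Import structures.
From mathcomp Require Import all_boot all_order all_algebra.
Set Implicit Arguments. Unset Strict Implicit. Unset Printing Implicit Defensive.
Import GRing.Theory.
Local Open Scope ring_scope.

(* ---------- Nodes of the Char-q-s network (1-based indices as in the paper) *)
Definition node := (nat * nat)%type.
Definition S_ : node := (0, 0)%N.
Definition X (i : nat) : node := (1, i)%N.
Definition M (i : nat) : node := (2, i)%N.
Definition N (i : nat) : node := (3, i)%N.
Definition R (i : nat) : node := (4, i)%N.

(* Edges are identified by (tail, head); the network has no parallel edges. *)
Definition edge := (node * node)%type.

Definition charqs_edges (q : nat) : seq edge :=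
  [seq (X 1, M i) | i <- iota 1 q.+1]
  ++ (S_, M 1) :: [seq (S_, M i) | i <- iota 4 q]
  ++ [seq (X ij.1, M ij.2) | ij <- [seq ij <- [seq (i, j) | i <- iota 2 q.+1, j <- iota 2 q.+1]
                                     | ij.1 != ij.2]]
  ++ [seq (X i, M (q + 3)) | i <- iota 1 (q + 2)]
  ++ [seq (M i, N i) | i <- iota 1 (q + 3)]
  ++ [seq (N i, R i) | i <- iota 1 (q + 2)]
  ++ [seq (N (q + 3), R i) | i <- iota 1 (q + 2)]
  ++ [seq (N i, R (q + 3)) | i <- iota 1 (q + 2)]
  ++ [seq (X i, R 1) | i <- iota 2 q]
  ++ [:: (X 1, R (q + 2)); (S_, R 2); (S_, R 3)].

Definition charqs_sources (q : nat) : seq node :=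
  S_ :: [seq X i | i <- iota 1 (q + 2)].

(* demands: pairs (terminal, demanded message source) *)
Definition charqs_demands (q : nat) : seq (node * node) :=
  (R 1, X (q + 2)) :: [seq (R i, X i) | i <- iota 2 q.+1] ++ [:: (R (q + 3), X 1)].

Record vlnc (F : fieldType) (d : nat) := Vlnc {
  enc : edge -> 'M[F]_d;                 (* A_e on an edge e out of a source *)
  coef : edge -> edge -> 'M[F]_d;        (* A_{e',e} at an intermediate node *)
  dec : node -> node -> edge -> 'M[F]_d  (* B_e used by terminal t to compute message v *)
}.

Definition edge_vectors_ok (F : fieldType) (d : nat) (E : seq edge) (src : seq node)
    (C : vlnc F d) (msg : node -> 'cV[F]_d) (y : edge -> 'cV[F]_d) : Prop :=
  forall e, e \in E ->
    if e.1 \in src then y e = enc C e *m msg e.1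
    else y e = \sum_(e' <- E | e'.2 == e.1) coef C e' e *m y e'.

Definition is_vlnc_solution (F : fieldType) (d : nat) (E : seq edge) (src : seq node)
    (dem : seq (node * node)) (C : vlnc F d) : Prop :=
  forall (msg : node -> 'cV[F]_d) (y : edge -> 'cV[F]_d),
    edge_vectors_ok E src C msg y ->
    forall tv, tv \in dem ->
      \sum_(e <- E | e.2 == tv.1) dec C tv.1 tv.2 e *m y e = msg tv.2.

Definition charqs_solution (q : nat) (F : fieldType) (d : nat) (C : vlnc F d) : Prop :=
  is_vlnc_solution (charqs_edges q) (charqs_sources q) (charqs_demands q) C.

(* y_{e_1} = M_1 x_1 + A_1 s with e_1 = (m_1, n_1); m_1 has in-edges (x_1,m_1), (s,m_1),
   so the s-coefficient matrix is A_1 = A_{(s,m_1),e_1} A_{(s,m_1)}. *)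
Definition s_coeff_e1 (F : fieldType) (d : nat) (C : vlnc F d) : 'M[F]_d :=
  coef C (S_, M 1) (M 1, N 1) *m enc C (S_, M 1).

(* Main.v *)
Require Import Defs.
From HB Require Import structures.
From mathcomp Require Import all_boot all_order all_algebra zify.
Set Implicit Arguments. Unset Strict Implicit. Unset Printing Implicit Defensive.
Import GRing.Theory.
Local Open Scope ring_scope.

Lemma filter_none (T : eqType) (P : pred T) (s : seq T) : (forall x, x \in s -> ~~ P x) -> filter P s = [::].
Proof.
move=> H; rewrite -(filter_pred0 s); apply: eq_in_filter => x /H /negbTE ->//.
Qed.

Lemma filter_one (P : pred nat) a n k : (a <= k < a + n)%N ->
  (forall i, i \in iota a n -> P i = (i == k)) -> filter P (iota a n) = [:: k].
Proof.
move=> Hk H; rewrite (eq_in_filter (a2 := pred1 k)) ?filter_pred1_uniq ?iota_uniq ?mem_iota //.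
Qed.

Definition c1 q := [seq (X 1, M i) | i <- iota 1 q.+1].
Definition c2 : seq edge := [:: (S_, M 1)].
Definition c3 q := [seq (S_, M i) | i <- iota 4 q].
Definition c4 q := [seq (X ij.1, M ij.2) | ij <- [seq ij <- [seq (i, j) | i <- iota 2 q.+1, j <- iota 2 q.+1] | ij.1 != ij.2]].
Definition c5 q := [seq (X i, M (q + 3)) | i <- iota 1 (q + 2)].
Definition c6 q := [seq (M i, N i) | i <- iota 1 (q + 3)].
Definition c7 q := [seq (N i, R i) | i <- iota 1 (q + 2)].
Definition c8 q := [seq (N (q + 3), R i) | i <- iota 1 (q + 2)].
Definition c9 q := [seq (N i, R (q + 3)) | i <- iota 1 (q + 2)].
Definition c10 q := [seq (X i, R 1) | i <- iota 2 q].
Definition c11 q : seq edge := [:: (X 1, R (q + 2)); (S_, R 2); (S_, R 3)].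

Lemma Eeq q : charqs_edges q = c1 q ++ c2 ++ c3 q ++ c4 q ++ c5 q ++ c6 q ++ c7 q ++ c8 q ++ c9 q ++ c10 q ++ c11 q.
Proof. by []. Qed.

Lemma c4P q x : x \in c4 q -> exists i j, [/\ x = (X i, M j), (2 <= i <= q + 2)%N, (2 <= j <= q+2)%N & i != j].
Proof.
case/mapP => [[i j]]; rewrite mem_filter => /andP[Hij Hm] ->.
have [[i' j'] [/= Hi Hj [Ei Ej]]] := allpairsP Hm; subst i' j'.
exists i, j; split => //; move: Hi Hj; rewrite ?in_cons ?mem_iota /=; lia.
Qed.

Lemma mapiotaP (T : eqType) (f : nat -> T) a n x :
  x \in [seq f i | i <- iota a n] -> exists i, x = f i /\ (a <= i < a + n)%N.
Proof. by case/mapP => i; rewrite mem_iota => Hi ->; exists i. Qed.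

Ltac knone :=
  rewrite filter_none; last first;
  [ let x := fresh "x" in let Hx := fresh "Hx" in
    move=> x Hx;
    first [ case/mapiotaP: Hx => ? [-> ?]
          | case/c4P: Hx => ? [? [-> ? ? ?]]
          | rewrite /c2 /c11 !inE in Hx; repeat case/orP: Hx => [/eqP ->|Hx]; try (move/eqP: Hx => ->) ];
    rewrite /= ?xpair_eqE /=; try done; lia
  | ].

Lemma inN q i : (1 <= i <= q + 3)%N ->
  [seq e <- charqs_edges q | e.2 == N i] = [:: (M i, N i)].
Proof.
move=> Hi; rewrite Eeq !filter_cat.
do 5 knone.
rewrite /c6 filter_map (@filter_one _ _ _ i) //.
do 5 knone.
by [].
Qed.

Lemma src_mem q (n : node) : (n \in charqs_sources q) = (n == S_) || ((n.1 == 1%N) && (1 <= n.2 <= q + 2)%N).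
Proof.
rewrite /charqs_sources in_cons; congr (_ || _).
apply/mapP/idP => [[i Hi ->]|/andP[/eqP H1 H2]]; first by rewrite /= -mem_iota.
by exists n.2; [rewrite mem_iota; lia | case: n H1 {H2} => a b /= ->].
Qed.

Definition good q (e : edge) : bool :=
  [&& (e.1 \in charqs_sources q) == (e.1.1 <= 1)%N,
      (e.2.1 == 2%N) ==> (e.1.1 <= 1)%N,
      (e.2.1 == 3%N) ==> (e.1.1 == 2%N),
      (e.1.1 <= 3)%N &
      ((e.2.1 == 2%N) && (2 <= e.2.2 <= q + 2)%N) ==> (e.1 != X e.2.2)].

Lemma Egood q e : e \in charqs_edges q -> good q e.
Proof.
rewrite Eeq !mem_cat => H.
repeat (case/orP: H => H; first
  (first [ case/mapiotaP: H => ? [-> ?]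
         | case/c4P: H => ? [? [-> ? ? ?]]
         | rewrite /c2 /c11 !inE in H; repeat case/orP: H => [/eqP ->|H]; try (move/eqP: H => ->) ];
   rewrite /good src_mem /= ?xpair_eqE /=; lia)).
first [ case/mapiotaP: H => ? [-> ?]
         | case/c4P: H => ? [? [-> ? ? ?]]
         | rewrite /c2 /c11 !inE in H; repeat case/orP: H => [/eqP ->|H]; try (move/eqP: H => ->) ];
   rewrite /good src_mem /= ?xpair_eqE /=; lia.
Qed.

Lemma inM1 q : [seq e <- charqs_edges q | e.2 == M 1] = [:: (X 1, M 1); (S_, M 1)].
Proof.
rewrite Eeq !filter_cat.
rewrite /c1 filter_map (@filter_one _ _ _ 1) //.
rewrite /c2 /=.
do 8 knone.
by [].
Qed.

Lemma inR3 q : (2 <= q)%N -> [seq e <- charqs_edges q | e.2 == R (q + 3)] =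
   [seq (N i, R (q + 3)) | i <- iota 1 (q + 2)].
Proof.
move=> Hq; rewrite Eeq !filter_cat.
do 8 knone.
rewrite {1}/c9 (@filter_none _ _ (c10 q)); last first.
  move=> x /mapiotaP [? [-> ?]]; rewrite /= ?xpair_eqE /=; lia.
rewrite (@filter_none _ _ (c11 q)); last first.
  move=> x; rewrite /c11 !inE => /or3P[] /eqP -> /=; rewrite ?xpair_eqE /=; lia.
rewrite /= cats0 (@eq_in_filter _ _ predT) ?filter_predT //.
by move=> x /mapiotaP [? [-> ?]]; rewrite /= eqxx.
Qed.

Lemma inRk q k : (2 <= k <= q + 2)%N -> [seq e <- charqs_edges q | e.2 == R k] =
   [:: (N k, R k); (N (q + 3), R k)] ++ [seq e <- c11 q | e.2 == R k].
Proof.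
move=> Hk; rewrite Eeq !filter_cat.
do 6 knone.
rewrite /c7 filter_map (@filter_one _ _ _ k) //.
rewrite /c8 filter_map (@filter_one _ _ _ k) //.
do 2 knone.
by [].
all: lia.
Qed.

Definition T0 (F : fieldType) d (C : vlnc F d) (u : node) (e : edge) : 'M[F]_d :=
  if e.1 == u then enc C e else 0.
Definition T1 q (F : fieldType) d (C : vlnc F d) u (e : edge) : 'M[F]_d :=
  \sum_(e' <- charqs_edges q | e'.2 == e.1) coef C e' e *m T0 C u e'.
Definition T2 q (F : fieldType) d (C : vlnc F d) u (e : edge) : 'M[F]_d :=
  \sum_(e' <- charqs_edges q | e'.2 == e.1) coef C e' e *m T1 q C u e'.
Definition Tm q (F : fieldType) d (C : vlnc F d) u (e : edge) : 'M[F]_d :=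
  if (e.1.1 <= 1)%N then T0 C u e else if e.1.1 == 2%N then T1 q C u e else T2 q C u e.
Definition dmsg (F : fieldType) d (u : node) (v : 'cV[F]_d) : node -> 'cV[F]_d :=
  fun n => if n == u then v else 0.

Lemma okT q (F : fieldType) d (C : vlnc F d) u v :
  edge_vectors_ok (charqs_edges q) (charqs_sources q) C (dmsg u v) (fun e => Tm q C u e *m v).
Proof.
move=> e He; have := Egood He; rewrite /good => /and5P [/eqP Hs H2 H3 H4 _].
rewrite Hs; case: ifP => H1.
  by rewrite /Tm H1 /T0 /dmsg; case: (e.1 == u); rewrite ?mul0mx ?mulmx0.
rewrite /Tm H1; case: ifP => H22.
  rewrite /T1 mulmx_suml big_seq_cond [in RHS]big_seq_cond; apply: eq_bigr => e' /andP[He' /eqP Ht].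
  have /and5P [_ H' _ _ _] := Egood He'.
  move: H'; rewrite Ht (eqP H22) /= => H'.
  by rewrite H' mulmxA.
rewrite /T2 mulmx_suml big_seq_cond [in RHS]big_seq_cond; apply: eq_bigr => e' /andP[He' /eqP Ht].
have Hc : e.1.1 = 3%N by move: H1 H22 H4; case: (e.1.1) => [|[|[|[|]]]].
have /and5P [_ _ H' _ _] := Egood He'.
move: H'; rewrite Ht Hc /= => /eqP H'.
by rewrite H' /= mulmxA.
Qed.

Lemma mx_ext (F : fieldType) d (A B : 'M[F]_d) : (forall v : 'cV_d, A *m v = B *m v) -> A = B.
Proof.
move=> H; apply/matrixP => i j; have := H (delta_mx j 0); rewrite -!colE.
by move/(congr1 (fun M : 'cV_d => M i 0)); rewrite !mxE.
Qed.

Lemma DEC q (F : fieldType) d (C : vlnc F d) u tv :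
  charqs_solution q C -> tv \in charqs_demands q ->
  \sum_(e <- charqs_edges q | e.2 == tv.1) dec C tv.1 tv.2 e *m Tm q C u e =
  (if tv.2 == u then 1%:M else 0).
Proof.
move=> Hsol Htv; apply: mx_ext => v.
rewrite mulmx_suml; have := Hsol _ _ (@okT q _ _ C u v) tv Htv.
under eq_bigr do rewrite mulmxA.
by move=> ->; rewrite /dmsg; case: (tv.2 == u); rewrite ?mul1mx ?mul0mx.
Qed.

Definition Mm q (F : fieldType) d (C : vlnc F d) u i : 'M[F]_d := T1 q C u (M i, N i).

Lemma TmN q (F : fieldType) d (C : vlnc F d) u i h : (1 <= i <= q + 3)%N ->
  Tm q C u (N i, h) = coef C (M i, N i) (N i, h) *m Mm q C u i.
Proof.
move=> Hi; rewrite /Tm /= /T2 /= -big_filter inN // big_cons big_nil addr0.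
by [].
Qed.

Lemma Mm_diag q (F : fieldType) d (C : vlnc F d) i : (2 <= i <= q + 2)%N ->
  Mm q C (X i) i = 0.
Proof.
move=> Hi; rewrite /Mm /T1 big_seq_cond big1 // => e' /andP[He' /eqP Ht].
have /and5P [_ _ _ _ H5] := Egood He'.
move: H5; rewrite Ht /= Hi => H5.
by rewrite /T0 (negbTE H5) mulmx0.
Qed.

Lemma Mm_1 q (F : fieldType) d (C : vlnc F d) u :
  Mm q C u 1 = coef C (X 1, M 1) (M 1, N 1) *m T0 C u (X 1, M 1)
             + coef C (S_, M 1) (M 1, N 1) *m T0 C u (S_, M 1).
Proof.
by rewrite /Mm /T1 -big_filter inM1 !big_cons big_nil addr0.
Qed.

Lemma sumRk q (F : fieldType) d (C : vlnc F d) k j (B : edge -> 'M[F]_d) :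
  (2 <= k <= q + 2)%N -> (2 <= j)%N ->
  \sum_(e <- charqs_edges q | e.2 == R k) B e *m Tm q C (X j) e =
  B (N k, R k) *m (coef C (M k, N k) (N k, R k) *m Mm q C (X j) k) +
  B (N (q + 3), R k) *m (coef C (M (q+3), N (q+3)) (N (q+3), R k) *m Mm q C (X j) (q + 3)).
Proof.
move=> Hk Hj; rewrite -big_filter inRk // big_cat.
have -> : \sum_(e <- [seq e <- c11 q | e.2 == R k]) B e *m Tm q C (X j) e = 0.
  rewrite big_seq big1 // => e; rewrite mem_filter /c11 !inE => /andP[_ /or3P[] /eqP ->];
  rewrite /Tm /T0 /= ?xpair_eqE /=; try (have -> : (1 == j) = false by apply/eqP; lia); by rewrite ?mulmx0.
rewrite /= addr0 !big_cons big_nil /= addr0 !TmN //; lia.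
Qed.

Lemma sumR3 q (F : fieldType) d (C : vlnc F d) u (B : edge -> 'M[F]_d) : (2 <= q)%N ->
  \sum_(e <- charqs_edges q | e.2 == R (q + 3)) B e *m Tm q C u e =
  \sum_(i <- iota 1 (q + 2)) B (N i, R (q + 3)) *m (coef C (M i, N i) (N i, R (q + 3)) *m Mm q C u i).
Proof.
move=> Hq; rewrite -big_filter inR3 // big_map big_seq [in RHS]big_seq.
by apply: eq_bigr => i; rewrite mem_iota => Hi; rewrite TmN //; lia.
Qed.

Lemma dem_k q k : k \in iota 2 q.+1 -> (R k, X k) \in charqs_demands q.
Proof. by move=> Hk; rewrite /charqs_demands in_cons mem_cat (map_f (fun i => (R i, X i))) ?orbT. Qed.

Lemma dem_3 q : (R (q + 3), X 1) \in charqs_demands q.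
Proof. by rewrite /charqs_demands in_cons mem_cat mem_seq1 eqxx !orbT. Qed.

Lemma sum_const_seq (V : zmodType) (r : seq nat) (c : V) : \sum_(i <- r) c = c *+ size r.
Proof. by elim: r => [|x r IH]; rewrite ?big_nil ?big_cons ?IH ?mulrS. Qed.

Unset Implicit Arguments.

Theorem lemma2 (q p : nat) (F : finFieldType) (d : nat) (C : vlnc F d) :
  (2 <= q)%N -> prime p -> ~~ (p %| q)%N -> p \in [pchar F] -> (0 < d)%N ->
  charqs_solution q C -> s_coeff_e1 C = 0.
Proof.
move=> Hq Hp Hpq Hch Hd Hsol.
have Hq0 : (q%:R : F) != 0 by rewrite -(dvdn_pcharf Hch).
pose I := iota 2 q.+1.
have memI k : (k \in I) = (2 <= k <= q + 2)%N by rewrite mem_iota; apply/idP/idP; lia.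
pose W k := dec C (R k) (X k) (N k, R k) *m coef C (M k, N k) (N k, R k).
pose Z k := dec C (R k) (X k) (N (q+3), R k) *m coef C (M (q+3), N (q+3)) (N (q+3), R k).
pose K j := Mm q C (X j) (q+3).
pose G i := dec C (R (q+3)) (X 1) (N i, R (q+3)) *m coef C (M i, N i) (N i, R (q+3)).
have EQk k j : k \in I -> j \in I ->
    W k *m Mm q C (X j) k + Z k *m K j = if k == j then 1%:M else 0.
  move=> Hk Hj; have := DEC (X j) Hsol (dem_k Hk).
  rewrite /= sumRk; last 2 first.
  - by rewrite -memI.
  - by move: Hj; rewrite memI; lia.
  by rewrite !mulmxA.
have Mkk k : k \in I -> Mm q C (X k) k = 0 by move=> Hk; apply: Mm_diag; rewrite -memI.
have ZK k : k \in I -> Z k *m K k = 1%:M.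
  by move=> Hk; have := EQk k k Hk Hk; rewrite Mkk // mulmx0 add0r eqxx.
have Ku k : k \in I -> K k \in unitmx by move=> Hk; exact: (mulmx1_unit (ZK k Hk)).2.
have Zu k : k \in I -> Z k \in unitmx by move=> Hk; exact: (mulmx1_unit (ZK k Hk)).1.
have WM k j : k \in I -> j \in I -> k != j -> W k *m Mm q C (X j) k = - (Z k *m K j).
  move=> Hk Hj Hkj; have := EQk k j Hk Hj; rewrite (negbTE Hkj) => /eqP.
  by rewrite addr_eq0 => /eqP.
have Wu k : k \in I -> W k \in unitmx.
  move=> Hk; pose j0 := if k == 2%N then 3%N else 2%N.
  have Hj0 : j0 \in I by rewrite memI /j0; case: ifP; lia.
  have Hkj : k != j0 by rewrite /j0; case: ifP => /eqP; lia.
  have HU : W k *m (- (Mm q C (X j0) k *m invmx (K j0) *m invmx (Z k))) = 1%:M.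
    rewrite mulmxN !mulmxA WM //.
    by rewrite !mulNmx opprK mulmxK ?Ku // mulmxV ?Zu.
  exact: (mulmx1_unit HU).1.
have Mform k j : k \in I -> j \in I -> k != j ->
    Mm q C (X j) k = - (invmx (W k) *m Z k *m K j).
  move=> Hk Hj Hkj; rewrite -[LHS](mulKmx (Wu k Hk)) WM // mulmxN !mulmxA //.
have EQ3 u : \sum_(i <- iota 1 (q + 2)) G i *m Mm q C u i = if X 1 == u then 1%:M else 0.
  have := DEC u Hsol (dem_3 q); rewrite /= sumR3 // => <-.
  by apply: eq_bigr => i _; rewrite mulmxA.
have iotaE : iota 1 (q + 2) = 1%N :: I by rewrite addn2.
have Mm1 j : j \in I -> Mm q C (X j) 1 = 0.
  move=> Hj; rewrite Mm_1 /T0 /= !xpair_eqE /=.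
  have -> : (1 == j)%N = false by apply/eqP; move: Hj; rewrite memI; lia.
  by rewrite !mulmx0 addr0.
pose H i := G i *m invmx (W i) *m Z i.
have hsum j : j \in I -> \sum_(i <- I | i != j) H i = 0.
  move=> Hj; have := EQ3 (X j); rewrite iotaE big_cons Mm1 // mulmx0 add0r.
  have -> : (X 1 == X j) = false by rewrite xpair_eqE /=; apply/eqP; move: Hj; rewrite memI; lia.
  rewrite (bigD1_seq j) ?iota_uniq // Mkk // mulmx0 /= add0r.
  have -> : \sum_(i <- I | i != j) G i *m Mm q C (X j) i = - ((\sum_(i <- I | i != j) H i) *m K j).
    rewrite mulmx_suml -sumrN big_seq_cond [RHS]big_seq_cond; apply: eq_bigr => i /andP[Hi Hij].
    rewrite Mform //.
    by rewrite mulmxN /H !mulmxA.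
  move/eqP; rewrite oppr_eq0 => /eqP H0.
  by rewrite -[LHS](mulmxK (Ku j Hj)) H0 mul0mx.
pose S := \sum_(i <- I) H i.
have HS j : j \in I -> H j = S by move=> Hj; rewrite /S (bigD1_seq j) ?iota_uniq // hsum // /= addr0.
have S0 : S = 0.
  have : S = S *+ q.+1.
    rewrite -(size_iota 2 q.+1) -sum_const_seq {1}/S big_seq [RHS]big_seq.
    by apply: eq_bigr => i Hi; rewrite HS.
  rewrite mulrS -{1}[S]addr0 => /addrI /esym /eqP.
  by rewrite -scaler_nat scaler_eq0 (negbTE Hq0) => /eqP.
have G0 j : j \in I -> G j = 0.
  move=> Hj; have : H j = 0 by rewrite HS.
  rewrite /H => /(congr1 (fun A => A *m invmx (Z j) *m W j)).
  by rewrite mulmxK ?Zu // mulmxKV ?Wu // !mul0mx.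
have sumG0 u : \sum_(i <- I) G i *m Mm q C u i = 0.
  by rewrite big_seq big1 // => i Hi; rewrite G0 // mul0mx.
have E1 := EQ3 (X 1); rewrite iotaE big_cons sumG0 addr0 eqxx in E1.
have E2 := EQ3 S_; rewrite iotaE big_cons sumG0 addr0 /= in E2.
have As : Mm q C S_ 1 = s_coeff_e1 C.
  by rewrite Mm_1 /T0 /= mulmx0 add0r.
rewrite -As -[Mm q C S_ 1]mul1mx -(mulmx1C E1) -mulmxA E2 mulmx0 //.
Qed.
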